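(* Let $n\ge 1$, $1\le k\le n$, and let $\omega_k$ be the $k$-th fundamental weight of $\mathfrak{sp}_{2n}(\mathbb C)$. Then the symplectic FFLV basis $\{f^{\mathsf p}\nu_{\omega_k} : \mathsf p\in S(\omega_k)\}$ of $V_{\omega_k}$ is in a weight preserving one-to-one correspondence with the set of single column symplectic PBW tableaux of length $k$.
   Context: Notation for $\mathfrak{sp}_{2n}$: $\varepsilon_1,\dots,\varepsilon_n$ is the standard basis of $\mathfrak h^*$, simple roots $\alpha_i=\varepsilon_i-\varepsilon_{i+1}$ ($i<n$), $\alpha_n=2\varepsilon_n$, fundamental weights $\omega_k=\varepsilon_1+\dots+\varepsilon_k$. For $1\le j\le n$ put $\bar j:=2n+1-j$. Let $\mathsf J=\{1<2<\dots<n<\overline{n-1}<\dots<\bar 1\}$; for $x\in\mathsf J$, $x+1$ denotes the successor of $x$ in $\mathsf J$. The positive roots are $\alpha_{i,j}=\alpha_i+\dots+\alpha_j=\varepsilon_i-\varepsilon_{j+1}$ for $1\le i\le j<n$, $\alpha_{i,n}=\alpha_i+\dots+\alpha_n=\varepsilon_i+\varepsilon_n$, and $\alpha_{i,\bar j}=\alpha_i+\dots+\alpha_n+\alpha_{n-1}+\dots+\alpha_j=\varepsilon_i+\varepsilon_j$ for $1\le i\le j\le n$ (with $\alpha_{i,\bar n}=\alpha_{i,n}$); write $\alpha_{\bar j}=\alpha_{j,\bar j}$. For each positive root $\alpha$ fix a nonzero root vector $f_\alpha\in\mathfrak n^-_{-\alpha}$, and write $f_{p,q}=f_{\alpha_{p,q}}$.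 A symplectic Dyck path is a sequence $\mathsf d=(\mathsf d(0),\dots,\mathsf d(s))$, $s\ge 0$, of positive roots such that $\mathsf d(0)=\alpha_i$ is simple, $\mathsf d(s)=\alpha_j$ or $\mathsf d(s)=\alpha_{\bar j}$ for some $j$, and if $\mathsf d(r)=\alpha_{p,q}$ ($p,q\in\mathsf J$) then $\mathsf d(r+1)\in\{\alpha_{p,q+1},\alpha_{p+1,q}\}$. For a dominant integral weight $\lambda=\sum_k m_k\omega_k$, the FFLV polytope $P(\lambda)\subset\mathbb R_{\ge0}^{n^2}$ consists of the points $(\mathsf p_\alpha)_{\alpha>0}$ with $\mathsf p_\alpha\ge 0$ such that for every Dyck path $\mathsf d$ with $\mathsf d(0)=\alpha_i$: $\sum_r \mathsf p_{\mathsf d(r)}\le m_i+\dots+m_j$ if $\mathsf d(s)=\alpha_j$, and $\sum_r \mathsf p_{\mathsf d(r)}\le m_i+\dots+m_n$ if $\mathsf d(s)=\alpha_{\bar j}$. $S(\lambda)$ is the set of integral points of $P(\lambda)$, and $f^{\mathsf p}=\prod_\alpha f_\alpha^{\mathsf p_\alpha}$ (product in a fixed order of root vectors). It is known (Feigin–Fourier–Littelmann) that $\{f^{\mathsf p}\nu_\lambda:\mathsf p\in S(\lambda)\}$ is a basis of the irreducible module $V_\lambda$ with highest weight vector $\nu_\lambda$ (the symplectic FFLV basis); the weight of $f^{\mathsf p}\nu_\lambda$ is $\lambda-\sum_\alpha \mathsf p_\alpha\alpha$. Let $\mathcal N=\{1<\dots<n<\bar n<\dots<\bar 1\}$. A single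 column symplectic PBW tableau of length $k$ is a column of $k$ boxes filled with entries $T_1,\dots,T_k\in\mathcal N$ (top to bottom) such that: (i) if $T_i\le k$ then $T_i=i$; (ii) if $i_1<i_2$ and $T_{i_1}\ne i_1$ then $T_{i_1}>T_{i_2}$; (iii) if $T_i=i$ and $T_{i'}=\bar i$ for some $i'$, then $i'<i$, whenever $i<k$. Its weight is $\sum_{i\in\{1,\dots,n\},\, i\text{ appears}}\varepsilon_i-\sum_{j\in\{1,\dots,n\},\,\bar j\text{ appears}}\varepsilon_j$. *)

(* Defs.v *)
From mathcomp Require Import all_boot all_order all_algebra.
Unset Printing Implicit Defensive.
Import GRing.Theory Num.Theory.

(* Encoding conventions:
   - The totally ordered set J = {1<..<n<bar(n-1)<..<bar 1} is encoded by
     positions 1..2n-1 (x <= n is x, n+m is bar(n-m)); the successor in J is +1.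
   - The positive root alpha_{p,q} (p,q in J) is encoded by the pair (p,q);
     positive roots are exactly the pairs with 1 <= p <= n, p <= q <= 2n-p.
     (q < n : eps_p - eps_{q+1};  q >= n : eps_p + eps_{2n-q}.)
   - N = {1<..<n<bar n<..<bar 1} is encoded by 1..2n with bar j = 2n+1-j. *)

Definition rootidx (n : nat) := ('I_n.+1 * 'I_(n.*2))%type.

Definition rv (n : nat) (x : rootidx n) : nat * nat := (val x.1, val x.2).

Definition is_posroot (n : nat) (x : nat * nat) : bool :=
  [&& 0 < x.1, x.1 <= n, x.1 <= x.2 & x.2 <= n.*2 - x.1].

Definition rootcoord (n : nat) (x : nat * nat) (l : nat) : int :=
  if x.2 < n then (((l == x.1) : nat)%:Z - ((l == x.2.+1) : nat)%:Z)%R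
  else (((l == x.1) : nat)%:Z + ((l == (n.*2 - x.2)%N) : nat)%:Z)%R.

Definition dyck_step (a b : nat * nat) : bool :=
  (b == (a.1, a.2.+1)) || (b == (a.1.+1, a.2)).

Definition is_dyck (n : nat) (d : seq (nat * nat)) : bool :=
  let s := head (0, 0) d in
  let e := last (0, 0) d in
  [&& d != [::], all (is_posroot n) d, s.1 == s.2,
      path dyck_step s (behead d) & (e.1 == e.2) || (e.1 + e.2 == n.*2)].

(* right-hand side of the Dyck path inequality for lambda = sum_l m l * omega_l *)
Definition dyck_bound (n : nat) (m : nat -> nat) (d : seq (nat * nat)) : nat :=
  let i := (head (0, 0) d).1 in
  let e := last (0, 0) d in
  if (e.1 == e.2) && (e.1 < n) then \sum_(i <= l < e.1.+1) m l
  else \sum_(i <= l < n.+1) m l.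

(* p is an integral point of the FFLV polytope P(lambda), i.e. p \in S(lambda)
   (entries at non-root indices are required to be 0) *)
Definition in_S (n : nat) (m : nat -> nat) (p : {ffun rootidx n -> nat}) : Prop :=
  (forall x : rootidx n, ~~ is_posroot n (rv n x) -> p x = 0%N) /\
  (forall d : seq (rootidx n), is_dyck n (map (rv n) d) ->
     \sum_(x <- d) p x <= dyck_bound n m (map (rv n) d)).

Definition omega (k : nat) : nat -> nat := fun l => (l == k) : nat.

(* eps_l coordinate of the weight lambda - sum_alpha p_alpha alpha of f^p nu_lambda *)
Definition fflv_wt (n : nat) (m : nat -> nat) (p : {ffun rootidx n -> nat})
  (l : nat) : int :=
  (((\sum_(l <= t < n.+1) m t)%N)%:Z
  - \sum_(x : rootidx n) (p x)%:Z * rootcoord n (rv n x) l)%R.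

Definition tab_entry (T : seq nat) (i : nat) : nat := nth 0%N T i.-1.

Definition is_sptab (n k : nat) (T : seq nat) : Prop :=
  [/\ size T = k,
      all (fun a => 0 < a <= n.*2) T,
      (forall i, 1 <= i <= k -> tab_entry T i <= k -> tab_entry T i = i),
      (forall i1 i2, 1 <= i1 -> i1 < i2 -> i2 <= k ->
         tab_entry T i1 <> i1 -> tab_entry T i2 < tab_entry T i1) &
      (forall i i', 1 <= i -> i < k -> 1 <= i' <= k ->
         tab_entry T i = i -> tab_entry T i' = n.*2.+1 - i -> i' < i)].

Definition tab_wt (n : nat) (T : seq nat) (l : nat) : int :=
  (((l \in T) : nat)%:Z - (((n.*2.+1 - l)%N \in T) : nat)%:Z)%R.

(* Main.v *)
Require Import Defs.
From mathcomp Require Import all_boot all_order all_algebra.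
From mathcomp Require Import zify.

Definition pn (n : nat) (p : {ffun rootidx n -> nat}) (a : nat * nat) : nat :=
  \sum_(x : rootidx n | rv n x == a) p x.

Lemma rv_inj n : injective (rv n).
Proof.
move=> [a b] [c d]; rewrite /rv /= => -[] h1 h2.
by congr pair; apply: val_inj.
Qed.

Lemma pnE n p x : pn n p (rv n x) = p x.
Proof.
rewrite /pn (big_pred1 x) //.
Qed.

Lemma rv_ex n a : 0 < a.1 -> a.1 <= n -> a.2 < n.*2 -> exists x, rv n x = a.
Proof.
case: a => a b /= h1 h2 h3.
have ha : a < n.+1 by lia.
by exists (Ordinal ha, Ordinal h3).
Qed.

Lemma pn_out n p a : ~~ ((a.1 < n.+1) && (a.2 < n.*2)) -> pn n p a = 0.
Proof.
move=> h; rewrite /pn big1 // => -[x y] /eqP E.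
move: h; rewrite -E /rv /=; by rewrite !ltn_ord.
Qed.

Lemma lift_seq n (s : seq (nat * nat)) : all (is_posroot n) s ->
  exists d : seq (rootidx n), map (rv n) d = s.
Proof.
elim: s => [|a s IH] /=; first by exists [::].
case/andP=> ha /IH [d hd].
move: ha; rewrite /is_posroot => /and4P [h1 h2 h3 h4].
have [x hx] : exists x, rv n x = a by apply: rv_ex => //; lia.
by exists (x :: d); rewrite /= hx hd.
Qed.

Lemma sum_seq_pn n (p : {ffun rootidx n -> nat}) (d : seq (rootidx n)) :
  \sum_(x <- d) p x = \sum_(a <- map (rv n) d) pn n p a.
Proof. by rewrite big_map; apply: eq_bigr => x _; rewrite pnE. Qed.

Lemma sum_ge1 (T : eqType) (F : T -> nat) (s : seq T) x :
  x \in s -> F x <= \sum_(y <- s) F y.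
Proof.
elim: s => [|y s IH] //; rewrite inE big_cons => /orP [/eqP ->|/IH h].
  exact: leq_addr.
by apply: (leq_trans h); apply: leq_addl.
Qed.

Lemma sum_ge2 (T : eqType) (F : T -> nat) (s : seq T) x y :
  x != y -> x \in s -> y \in s -> F x + F y <= \sum_(z <- s) F z.
Proof.
move=> nxy; elim: s => [|z s IH] //; rewrite !inE big_cons.
case: (eqVneq x z) => [<- _ /=|nxz /= hx].
  rewrite eq_sym (negbTE nxy) /= => hy.
  by rewrite leq_add2l; apply: sum_ge1.
case: (eqVneq y z) => [<- _|nyz /= hy].
  by rewrite addnC leq_add2l; apply: sum_ge1.
by apply: (leq_trans (IH hx hy)); apply: leq_addl.
Qed.

Lemma sumk k a b : \sum_(a <= l < b) omega k l = ((a <= k) && (k < b)).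
Proof.
elim: b => [|b IH]; first by rewrite big_geq //; case: (a <= k).
case: (leqP a b) => hab.
  rewrite big_nat_recr //= IH /omega.
  case: (eqVneq b k) => [<-|nb]; first by rewrite ltnn andbF ltnSn andbT hab.
  have nb2 : (k == b) = false by rewrite eq_sym (negbTE nb).
  by rewrite addn0 ltnS [k <= b]leq_eqVlt nb2.
rewrite big_geq //.
by case: (boolP ((a <= k) && (k < b.+1))) => [/andP [h1 h2]|h] //; lia.
Qed.

Definition emin (n c : nat) := minn c (n.*2 - c).
Definition pt (a c t : nat) : nat * nat :=
  if t <= c - a then (a, a + t) else (a + (t - (c - a)), c).
Definition PL (n a c : nat) := (c - a) + (emin n c - a).
Definition P (n a c : nat) := map (pt a c) (iota 0 (PL n a c).+1).

Lemma iota_path (e : rel nat) m L :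
  (forall t, m <= t -> t < m + L -> e t t.+1) -> path e m (iota m.+1 L).
Proof.
elim: L m => [|L IH] m h //=.
rewrite h ?addnS ?leqnn ?ltnS ?leq_addr //=.
apply: IH => t h1 h2; apply: h; lia.
Qed.

Lemma P_dyck n a c : 1 <= a <= n -> a <= c <= n.*2 - a -> is_dyck n (P n a c).
Proof.
move=> ha hc.
rewrite /is_dyck /P /=.
have h0 : pt a c 0 = (a, a) by rewrite /pt /= addn0.
rewrite h0 /= addn0 eqxx; apply/and4P; split => //.
- apply/andP; split; first by rewrite /is_posroot /=; apply/and4P; split; lia.
  apply/allP => x /mapP [t]; rewrite mem_iota => ht ->.
  rewrite /pt /is_posroot /PL /emin in ht *; case: ifP => h /=; apply/and4P; split; lia.
- rewrite -h0 path_map; apply: iota_path => t h1 h2.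
  rewrite /= /dyck_step /pt /PL /emin in h2 *.
  case: ifP => H1; case: ifP => H2 /=; apply/orP.
  + by left; apply/eqP; congr pair; lia.
  + by left; apply/eqP; congr pair; lia.
  + by right; apply/eqP; congr pair; lia.
  + by right; apply/eqP; congr pair; lia.
- rewrite -h0 last_map.
  have -> : last 0 (iota 1 (PL n a c)) = PL n a c.
    case: (PL n a c) => [|L] //.
    by rewrite -nth_last size_iota nth_iota //= add1n.
  rewrite /pt /PL /emin; case: ifP => H /=; apply/orP; lia.
Qed.

Lemma P_mem1 n a b c : a <= b <= c -> (a, b) \in P n a c.
Proof.
move=> h; apply/mapP; exists (b - a); first by rewrite mem_iota /PL; lia.
rewrite /pt; case: ifP => H; congr pair; lia.
Qed.

Lemma P_mem2 n a c i : a <= c -> a <= i <= emin n c -> (i, c) \in P n a c.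
Proof.
move=> h1 h2; apply/mapP; exists ((c - a) + (i - a)); first by rewrite mem_iota /PL; lia.
rewrite /pt; case: ifP => H; congr pair; lia.
Qed.

Lemma P_head n a c : head (0, 0) (P n a c) = (a, a).
Proof. by rewrite /P /= /pt /= addn0. Qed.

Lemma P_last n a c : a <= c <= n.*2 - a -> last (0, 0) (P n a c) = (emin n c, c).
Proof.
move=> hc; rewrite /P /= last_map.
have -> : last 0 (iota 1 (PL n a c)) = PL n a c.
  case: (PL n a c) => [|L] //.
  by rewrite -nth_last size_iota nth_iota //= add1n.
rewrite /pt /PL /emin; case: ifP => H; congr pair; lia.
Qed.

Lemma P_bound n k a c : k <= n -> 1 <= a -> a <= c <= n.*2 - a ->
  dyck_bound n (omega k) (P n a c) = ((a <= k) && (k <= c)).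
Proof.
move=> hk ha hc; rewrite /dyck_bound P_head P_last //= /emin.
case: ifP => H; rewrite sumk; lia.
Qed.

Lemma inS_P n k (p : {ffun rootidx n -> nat}) a c : in_S n (omega k) p -> k <= n -> 1 <= a <= n ->
  a <= c <= n.*2 - a ->
  \sum_(y <- P n a c) pn n p y <= ((a <= k) && (k <= c)).
Proof.
move=> [_ hS] hk ha hc.
have hD := P_dyck n a c ha hc.
have [d hd] : exists d : seq (rootidx n), map (rv n) d = P n a c.
  by apply: lift_seq; move: hD; rewrite /is_dyck => /and5P [].
rewrite -hd -sum_seq_pn -(P_bound n k a c hk _ hc); last by lia.
by rewrite -hd; apply: hS; rewrite hd.
Qed.

Definition Sn n k (F : nat * nat -> nat) : Prop :=
  [/\ forall a, F a != 0 -> is_posroot n a && (a.1 <= k <= a.2),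
      forall a, F a <= 1 &
      forall a b, a != b -> a.1 <= b.1 -> a.2 <= b.2 -> F a + F b <= 1].

Lemma pn_nonroot n (p : {ffun rootidx n -> nat}) a : (forall x, ~~ is_posroot n (rv n x) -> p x = 0) ->
  ~~ is_posroot n a -> pn n p a = 0.
Proof. by move=> h ha; rewrite /pn big1 // => x /eqP E; apply: h; rewrite E. Qed.

Lemma inS_Sn n k (p : {ffun rootidx n -> nat}) : in_S n (omega k) p -> k <= n -> Sn n k (pn n p).
Proof.
move=> hS hk; have h0 := fun a => pn_nonroot n p a (proj1 hS).
have le1 : forall a, pn n p a <= 1.
  move=> [a b]; case: (boolP (is_posroot n (a, b))) => hr; last by rewrite h0.
  move: hr; rewrite /is_posroot /= => /and4P [r1 r2 r3 r4].
  have := inS_P n k p a b hS hk.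
  move=> /(_ ltac:(lia) ltac:(lia)) H.
  have H2 := sum_ge1 _ (pn n p) _ _ (P_mem1 n a b b ltac:(lia)).
  apply: (leq_trans H2); apply: (leq_trans H); lia.
split => //.
- move=> [a b] hne.
  case: (boolP (is_posroot n (a, b))) => hr; last by move: hne; rewrite h0.
  apply/andP; split => //; move: hr; rewrite /is_posroot /= => /and4P [r1 r2 r3 r4].
  have := inS_P n k p a b hS hk.
  move=> /(_ ltac:(lia) ltac:(lia)) H.
  have H2 := sum_ge1 _ (pn n p) _ _ (P_mem1 n a b b ltac:(lia)).
  have := leq_trans H2 H; lia.
- move=> [a1 a2] [b1 b2] hne /= h1 h2.
  case: (boolP (is_posroot n (a1, a2))) => hra; last by rewrite h0 // add0n le1.
  case: (boolP (is_posroot n (b1, b2))) => hrb; last by rewrite [pn n p (b1, b2)]h0 // addn0 le1.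
  move: hra hrb; rewrite /is_posroot /= => /and4P [r1 r2 r3 r4] /and4P [s1 s2 s3 s4].
  have := inS_P n k p a1 b2 hS hk.
  move=> /(_ ltac:(lia) ltac:(lia)) H.
  have m1 := P_mem1 n a1 a2 b2 ltac:(lia).
  have m2 := P_mem2 n a1 b2 b1 ltac:(lia) ltac:(rewrite /emin; lia).
  have := sum_ge2 _ (pn n p) _ _ _ hne m1 m2 => H2.
  apply: (leq_trans H2); apply: (leq_trans H); lia.
Qed.

Definition lt2 (a b : nat * nat) := [&& a.1 + a.2 < b.1 + b.2, a.1 <= b.1 & a.2 <= b.2].
Definition le2 (a b : nat * nat) := (a.1 <= b.1) && (a.2 <= b.2).

Lemma lt2_trans : transitive lt2.
Proof. move=> b a c; rewrite /lt2 => /and3P [h1 h2 h3] /and3P [h4 h5 h6]; apply/and3P; split; lia. Qed.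

Lemma step_lt2 a b : dyck_step a b -> lt2 a b.
Proof.
case: a b => [a1 a2] [b1 b2]; rewrite /dyck_step /lt2 /= => /orP [] /eqP [-> ->]; apply/and3P; split; lia.
Qed.

Lemma chain_le h t : path lt2 h t -> forall y, y \in h :: t -> le2 h y && le2 y (last h t).
Proof.
elim: t h => [|z t IH] h /=.
  by move=> _ y; rewrite inE => /eqP ->; rewrite /le2 !leqnn.
case/andP => hz hp y; rewrite inE => /orP [/eqP ->|hy].
  have := IH z hp z; rewrite inE eqxx => /(_ isT) /andP [_].
  move: hz; rewrite /lt2 /le2 => /and3P [h1 h2 h3] /andP [h4 h5].
  apply/andP; split; apply/andP; split; lia.
have := IH z hp y hy => /andP [].
move: hz; rewrite /lt2 /le2 => /and3P [h1 h2 h3] /andP [h4 h5] ->.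
by rewrite andbT; apply/andP; split; lia.
Qed.

Lemma chain_sum (F : nat * nat -> nat) h t :
  (forall a, F a <= 1) ->
  (forall a b, a != b -> a.1 <= b.1 -> a.2 <= b.2 -> F a + F b <= 1) ->
  path lt2 h t -> \sum_(y <- h :: t) F y <= 1.
Proof.
move=> le1 anti; elim: t h => [|z t IH] h.
  by rewrite big_cons big_nil addn0.
move=> hp; have hall := order_path_min lt2_trans hp.
move: hp => /= /andP [hz hp].
rewrite big_cons.
case: (posnP (F h)) => Fh.
  by rewrite Fh add0n; apply: IH.
have Fh1 : F h = 1 by have := le1 h; lia.
rewrite big1_seq ?addn0 // => y /andP [_ hy].
move/allP: hall => /(_ y hy); rewrite /lt2 => /and3P [h1 h2 h3].
have hne : h != y by apply/eqP => E; move: h1; rewrite E; lia.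
have := anti h y hne h2 h3; lia.
Qed.

Lemma Sn_inS n k (p : {ffun rootidx n -> nat}) : k <= n -> Sn n k (pn n p) ->
  in_S n (omega k) p.
Proof.
move=> hk [S1 S2 S3]; split.
  move=> x hx; rewrite -pnE; apply/eqP; apply: contraT => /S1.
  by rewrite (negbTE hx).
move=> d hd; rewrite sum_seq_pn.
move: hd; set s := map (rv n) d; case: s => [|h t] //.
rewrite /is_dyck /= => /and4P [_ _ hp _].
have hp2 : path lt2 h t by apply: sub_path hp; exact: step_lt2.
case: (boolP (has (fun y => pn n p y != 0) (h :: t))) => hh.
  case/hasP: hh => y hy /S1 /andP [_ /andP [y1 y2]].
  have /andP [/andP [c1 c2] /andP [c3 c4]] := chain_le h t hp2 y hy.
  apply: (leq_trans (chain_sum _ h t S2 S3 hp2)).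
  rewrite /dyck_bound /=; case: ifP => H; rewrite sumk; lia.
rewrite big1_seq // => y /andP [_ hy].
by apply/eqP; apply: contraNT hh => H; apply/hasP; exists y.
Qed.

Definition gv (n : nat) (F : nat * nat -> nat) (i : nat) : nat :=
  i + \sum_(q < n.*2) F (i, val q) * (q.+1 - i).

Lemma row_spec n k (F : nat * nat -> nat) i : Sn n k F -> 1 <= i <= k ->
  ((forall q, F (i, q) = 0) /\ gv n F i = i) \/
  exists q, [/\ F (i, q) = 1, (forall q', q' != q -> F (i, q') = 0),
               gv n F i = q.+1, k <= q & q <= n.*2 - i].
Proof.
move=> [S1 S2 S3] hi.
case: (boolP [exists q : 'I_(n.*2), F (i, val q) != 0]) => hex.
  right; case/existsP: hex => -[q0 hq2] /= hq0.
  have := S1 _ hq0; rewrite /is_posroot /= => /andP [/and4P [r1 r2 r3 r4] /andP [r5 r6]].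
  have F1 : F (i, q0) = 1 by have := S2 (i, q0); move: hq0; set u := F _; lia.
  have F0 : forall q', q' != q0 -> F (i, q') = 0.
    move=> q' hq'.
    have hne : (i, q0) != (i, q') by rewrite xpair_eqE eqxx /= eq_sym.
    case: (leqP q0 q') => hle.
      have := S3 _ _ hne (leqnn i) hle; rewrite /=; lia.
    have hne' : (i, q') != (i, q0) by rewrite eq_sym.
    have := S3 _ _ hne' (leqnn i) (ltnW hle); rewrite /=; lia.
  exists q0; split; [done|done| |lia|lia].
  rewrite /gv (bigD1 (Ordinal hq2)) //= big1 ?F1; first by lia.
  move=> j hj; rewrite F0 //; apply: contra hj => /eqP hj; apply/eqP; exact: val_inj.
left.
have F0 : forall q, F (i, q) = 0.
  move=> q; apply/eqP; apply: contraT => hq.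
  case: (ltnP q n.*2) => hq2.
    by move: hex; rewrite negb_exists => /forallP /(_ (Ordinal hq2)) /=; rewrite hq.
  have := S1 _ hq; rewrite /is_posroot /= => /andP [/and4P [r1 r2 r3 r4] _]; lia.
split => //; rewrite /gv big1 ?addn0 // => j _; by rewrite F0.
Qed.

Lemma tabE n k F i : 1 <= i <= k ->
  tab_entry (map (gv n F) (iota 1 k)) i = gv n F i.
Proof.
move=> hi; rewrite /tab_entry (nth_map 0); last by rewrite size_iota; lia.
rewrite nth_iota; last by lia.
congr gv; lia.
Qed.

Lemma fmap_tab n k F : 1 <= k <= n -> Sn n k F ->
  is_sptab n k (map (gv n F) (iota 1 k)).
Proof.
move=> hk S; have [S1 S2 S3] := S.
split.
- by rewrite size_map size_iota.
- apply/allP => x /mapP [i]; rewrite mem_iota => hi ->.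
  have [[R0 G0]|[q [Q1 Q0 G Q2 Q3]]] := row_spec n k F i S ltac:(lia); lia.
- move=> i hi; rewrite tabE //.
  have [[R0 G0]|[q [Q1 Q0 G Q2 Q3]]] := row_spec n k F i S hi; lia.
- move=> i1 i2 h1 h12 h2; rewrite !tabE; try lia.
  have [[R0 G0]|[q [Q1 Q0 G Q2 Q3]]] := row_spec n k F i1 S ltac:(lia); first lia.
  have [[R0' G0']|[q' [Q1' Q0' G' Q2' Q3']]] := row_spec n k F i2 S ltac:(lia); first lia.
  move=> _; rewrite G G'; case: (ltnP q' q) => // hle.
  have hne : (i1, q) != (i2, q') by rewrite xpair_eqE negb_and; apply/orP; left; lia.
  have := S3 _ _ hne (ltnW h12) hle; rewrite Q1 Q1'; lia.
- move=> i i' h1 h2 h3; rewrite !tabE; try lia.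
  case: (eqVneq i' i) => [->|hne]; first lia.
  have [[R0 G0]|[q [Q1 Q0 G Q2 Q3]]] := row_spec n k F i' S ltac:(lia); lia.
Qed.

Definition ptab n k (T : seq nat) : {ffun rootidx n -> nat} :=
  [ffun x => ((0 < nat_of_ord x.1) && (nat_of_ord x.1 <= k) &&
              (tab_entry T x.1 == (nat_of_ord x.2).+1) && (tab_entry T x.1 != x.1) : nat)].

Lemma pn_ptab n k T a b : pn n (ptab n k T) (a, b) =
  [&& a < n.+1, b < n.*2, 0 < a, a <= k, tab_entry T a == b.+1 & tab_entry T a != a].
Proof.
case: (boolP ((a < n.+1) && (b < n.*2))) => h.
  case/andP: h => ha hb.
  have -> : (a, b) = rv n (Ordinal ha, Ordinal hb) by [].
  by rewrite pnE ffunE /= ha hb /= !andbA.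
rewrite pn_out //; move: h; case: (a < n.+1); case: (b < n.*2) => //.
Qed.

Lemma tab_range n k T i : is_sptab n k T -> 1 <= i <= k ->
  0 < tab_entry T i <= n.*2.
Proof.
move=> [hs ha _ _ _] hi; move/allP: ha; apply; rewrite /tab_entry.
apply: mem_nth; rewrite hs; lia.
Qed.

Lemma tab_bar n k T i : is_sptab n k T -> k <= n -> 1 <= i <= k ->
  tab_entry T i != i -> tab_entry T i <= n.*2.+1 - i.
Proof.
move=> hT hkn hi hne.
have key : forall j i, 1 <= i <= k -> tab_entry T i != i ->
    tab_entry T i = n.*2.+1 - j -> j < i -> False.
  elim/ltn_ind => j IH i0 hi0 hne0 E hj.
  have [_ _ T1 T2 T3] := hT.
  have r0 := tab_range n k T i0 hT hi0.
  case: (eqVneq (tab_entry T j) j) => Hj.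
    have := T3 j i0 ltac:(lia) ltac:(lia) hi0 Hj E; lia.
  have lt := T2 j i0 ltac:(lia) hj ltac:(lia) ltac:(by apply/eqP).
  have rj := tab_range n k T j hT.
  have rj' := rj ltac:(lia).
  apply: (IH (n.*2.+1 - tab_entry T j) _ j _ Hj); lia.
have r := tab_range n k T i hT hi.
case: (leqP (tab_entry T i) (n.*2.+1 - i)) => // H.
exfalso; apply: (key (n.*2.+1 - tab_entry T i) i hi hne); lia.
Qed.

Lemma ptab_Sn n k T : is_sptab n k T -> 1 <= k <= n -> Sn n k (pn n (ptab n k T)).
Proof.
move=> hT hk; have [_ _ T1 T2 T3] := hT; split.
- move=> [a b]; rewrite pn_ptab.
  case: (boolP [&& _, _, _, _, _ & _]) => //= /and3P [h1 h2 /and4P [h3 h4 h5 h6]] _.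
  have hb := tab_bar n k T a hT ltac:(lia) ltac:(lia) h6.
  have hr := tab_range n k T a hT ltac:(lia).
  have hgt : k < tab_entry T a.
    case: (leqP (tab_entry T a) k) => // H; have := T1 a ltac:(lia) H; move: h6; lia.
  rewrite /is_posroot /=; move: h5 => /eqP h5; apply/andP; split; first (apply/and4P; split); lia.
- by move=> a; case: a => a b; rewrite pn_ptab; case: (_ && _).
- move=> [a1 a2] [b1 b2] hne /= h1 h2; rewrite !pn_ptab.
  case: (boolP [&& _, _, _, _, _ & _]) => [/and3P [p1 p2 /and4P [p3 p4 /eqP p5 p6]]|_]; last by rewrite add0n leq_b1.
  case: (boolP [&& _, _, _, _, _ & _]) => [/and3P [q1 q2 /and4P [q3 q4 /eqP q5 q6]]|_]; last by rewrite addn0 leq_b1.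
  exfalso; case: (eqVneq a1 b1) => [E|hab].
    subst b1; move: hne; rewrite xpair_eqE eqxx /=; move: p5 q5; lia.
  have := T2 a1 b1 p3 ltac:(lia) q4 ltac:(by apply/eqP); lia.
Qed.

Lemma ptab_fmap n k T : is_sptab n k T -> 1 <= k <= n ->
  map (gv n (pn n (ptab n k T))) (iota 1 k) = T.
Proof.
move=> hT hk; have S := ptab_Sn n k T hT hk; have [hs _ _ _ _] := hT.
apply: (@eq_from_nth _ 0); first by rewrite size_map size_iota hs.
move=> j; rewrite size_map size_iota => hj.
have := tabE n k (pn n (ptab n k T)) j.+1 ltac:(lia).
rewrite /tab_entry /= => ->.
have hr := tab_range n k T j.+1 hT ltac:(lia); rewrite /tab_entry /= in hr.
have [[R0 G0]|[q [Q1 Q0 G Q2 Q3]]] := row_spec n k _ j.+1 S ltac:(lia).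
  rewrite G0; apply/esym/eqP; apply: contraT => H.
  have := R0 (nth 0 T j).-1; rewrite pn_ptab /tab_entry /=; move: hj hk hr H; clear; lia.
rewrite G; move: Q1; rewrite pn_ptab /tab_entry /=.
lia.
Qed.

Lemma fmap_ptab n k (p : {ffun rootidx n -> nat}) : Sn n k (pn n p) ->
  ptab n k (map (gv n (pn n p)) (iota 1 k)) = p.
Proof.
move=> S; have [S1 S2 S3] := S.
apply/ffunP => x; rewrite ffunE -pnE; case: x => [[a ha] [b hb]] /=.
rewrite /rv /=.
case: (boolP ((0 < a) && (a <= k))) => hi; last first.
  case: (boolP (pn n p (a, b) != 0)) => H.
    by have := S1 _ H; rewrite /is_posroot /=; move: hi; clear; lia.
  move: H; rewrite negbK => /eqP ->; move: hi; case: (0 < a); case: (a <= k) => //.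
rewrite tabE //=.
have [[R0 G0]|[q [Q1 Q0 G Q2 Q3]]] := row_spec n k _ a S hi.
  by rewrite G0 R0 eqxx /= andbF.
rewrite G; case: (eqVneq b q) => [->|hbq].
  rewrite Q1 eqxx /=; move: hi Q2; clear; case: eqP => //; lia.
rewrite Q0 //=; move: hbq; clear; case: eqP => //; lia.
Qed.

Import GRing.Theory.

Lemma mem_sum (s : seq nat) x : uniq s -> ((x \in s) : nat) = \sum_(y <- s) (y == x : nat).
Proof.
elim: s => [|y s IH] /=; first by rewrite big_nil.
case/andP => hy hu; rewrite big_cons inE -IH //.
case: (eqVneq x y) => [->|ne] //=.
by rewrite (negbTE hy).
Qed.

Lemma sumZ (r : seq nat) (G : nat -> nat) :
  (((\sum_(i <- r) G i)%N)%:Z = \sum_(i <- r) (G i)%:Z)%R.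
Proof.
elim: r => [|a r IH]; first by rewrite !big_nil.
by rewrite !big_cons PoszD IH.
Qed.

Lemma fmap_uniq n k F : Sn n k F -> uniq (map (gv n F) (iota 1 k)).
Proof.
move=> S; have [S1 S2 S3] := S.
rewrite map_inj_in_uniq ?iota_uniq // => i j; rewrite !mem_iota => hi hj E.
have [[R0 G0]|[q [Q1 Q0 G Q2 Q3]]] := row_spec n k _ i S ltac:(lia);
have [[R0' G0']|[q' [Q1' Q0' G' Q2' Q3']]] := row_spec n k _ j S ltac:(lia); try lia.
have eq : q = q' by lia.
subst q'; apply/eqP; apply: contraT => ne.
case: (ltnP i j) => h.
  have hne : (i, q) != (j, q) by rewrite xpair_eqE negb_and ne.
  by have := S3 _ _ hne (ltnW h) (leqnn q); rewrite /= Q1 Q1'.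
have hne : (j, q) != (i, q) by rewrite xpair_eqE negb_and eq_sym ne.
by have := S3 _ _ hne h (leqnn q); rewrite /= Q1 Q1'.
Qed.

Definition Rrow n (F : nat * nat -> nat) (l i : nat) : int :=
  (\sum_(q < n.*2) (F (i, val q))%:Z * rootcoord n (i, val q) l)%R.

Lemma row_wt n k F i l : 1 <= k <= n -> Sn n k F -> 1 <= i <= k -> 1 <= l <= n ->
  ((((i == l) : nat)%:Z - Rrow n F l i)%R =
   (((gv n F i == l) : nat)%:Z - ((gv n F i == (n.*2.+1 - l)%N) : nat)%:Z)%R).
Proof.
move=> hk S hi hl.
have [[R0 G0]|[q [Q1 Q0 G Q2 Q3]]] := row_spec n k _ i S hi.
  rewrite /Rrow big1 => [|j _]; last by rewrite R0 mul0r.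
  rewrite G0; lia.
have hq : q < n.*2 by lia.
rewrite /Rrow (bigD1 (Ordinal hq)) //= big1 => [|j hj]; last first.
  rewrite Q0 ?mul0r //; apply: contra hj => /eqP hj; apply/eqP; exact: val_inj.
rewrite Q1 G mul1r addr0 /rootcoord /=; case: ifP => H; lia.
Qed.

Lemma wt_eq n k (p : {ffun rootidx n -> nat}) l : 1 <= k <= n -> Sn n k (pn n p) -> 1 <= l <= n ->
  tab_wt n (map (gv n (pn n p)) (iota 1 k)) l = fflv_wt n (omega k) p l.
Proof.
move=> hk S hl; have [S1 S2 S3] := S.
have U := fmap_uniq n k (pn n p) S.
have F0 : forall a b, ~~ ((0 < a) && (a <= k)) -> pn n p (a, b) = 0.
  move=> a b ha; apply/eqP; apply: contraT => /S1; rewrite /is_posroot /=; lia.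
have E1 : (((l <= k) && (k < n.+1)) : nat) = \sum_(i <- iota 1 k) (i == l : nat).
  by rewrite -mem_sum ?iota_uniq // mem_iota; lia.
have E2 : (\sum_(x : rootidx n) (p x)%:Z * rootcoord n (rv n x) l)%R =
          (\sum_(i <- iota 1 k) Rrow n (pn n p) l i)%R.
  transitivity (\sum_(a < n.+1) \sum_(b < n.*2) (p (a, b))%:Z * rootcoord n (rv n (a, b)) l)%R.
    by rewrite pair_bigA; apply: eq_bigr => -[a b].
  transitivity (\sum_(a < n.+1) Rrow n (pn n p) l a)%R.
    by apply: eq_bigr => a _; apply: eq_bigr => b _; rewrite -pnE.
  rewrite -(big_mkord xpredT (Rrow n (pn n p) l)).
  have Z0 : forall i, ~~ ((0 < i) && (i <= k)) -> Rrow n (pn n p) l i = 0%R.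
    by move=> i hi; rewrite /Rrow big1 // => j _; rewrite F0 ?mul0r.
  rewrite /index_iota subn0.
  have -> : n.+1 = 1 + (k + (n - k)) by lia.
  rewrite !iotaD !big_cat /= big_cons big_nil Z0 // add0r add0n.
  rewrite [X in (_ + X)%R]big1_seq ?addr0 //.
  by move=> i /andP [_]; rewrite mem_iota => hi; apply: Z0; lia.
rewrite /tab_wt /fflv_wt sumk E1 !mem_sum // !big_map !sumZ E2 -!sumrB.
apply: eq_big_seq => i; rewrite mem_iota => hi.
by rewrite (row_wt n k) //; lia.
Qed.

Theorem proposition3p8 (n k : nat) (hn : 1 <= n) (hk : 1 <= k <= n) :
  exists f : {ffun rootidx n -> nat} -> seq nat,
    [/\ (forall p, in_S n (omega k) p -> is_sptab n k (f p)),
        (forall p1 p2, in_S n (omega k) p1 -> in_S n (omega k) p2 ->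
           f p1 = f p2 -> p1 = p2),
        (forall T, is_sptab n k T -> exists p, in_S n (omega k) p /\ f p = T) &
        (forall p, in_S n (omega k) p -> forall l, 1 <= l <= n ->
           tab_wt n (f p) l = fflv_wt n (omega k) p l)].
Proof.
have hkn : k <= n by lia.
exists (fun p => map (gv n (pn n p)) (iota 1 k)); split.
- move=> p hp; apply: fmap_tab => //; exact: inS_Sn.
- move=> p1 p2 h1 h2 /= E.
  rewrite -(fmap_ptab n k p1 (inS_Sn n k p1 h1 hkn)).
  by rewrite -(fmap_ptab n k p2 (inS_Sn n k p2 h2 hkn)) E.
- move=> T hT; exists (ptab n k T); split.
    by apply: Sn_inS => //; exact: ptab_Sn.
  exact: ptab_fmap.
- move=> p hp l hl; apply: wt_eq => //; exact: inS_Sn.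
Qed.
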